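(* Let $m\ge0$ be an integer. For each $n\ge0$ and $x\in O$: (1) $\mathcal{D}_n(x)^{q^m}=\sum_{i=0}^\infty[m]^i\binom{i+n}{n}\mathcal{D}_{i+n}(x)$; (2) $\mathcal{D}_n(x)=\sum_{i=0}^\infty(-[m])^i\binom{i+n}{n}\mathcal{D}_{i+n}(x)^{q^m}$.
   Context: Let $q$ be a prime power, $O=\mathbf{F}_q[[T]]$ with the $T$-adic topology. Put $[m]=T^{q^m}-T$. Hasse derivatives: $\mathcal{D}_n(\sum_ia_iT^i)=\sum_i\binom{i}{n}a_iT^{i-n}$; all binomial coefficients are read in $\mathbf{F}_q$. *)

(* Defs.v *)
From mathcomp Require Import all_boot all_algebra all_field.
Set Implicit Arguments. Unset Strict Implicit. Unset Printing Implicit Defensive.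
Import GRing.Theory.
Local Open Scope ring_scope.

(* Formal power series O = F[[T]] over a finite field F (q := #|F|),
   represented by their coefficient sequences: x k = coefficient of T^k. *)
Definition ps (F : finFieldType) := nat -> F.

Section PS.
Variable F : finFieldType.

Definition ps_add (a b : ps F) : ps F := fun k => a k + b k.
Definition ps_opp (a : ps F) : ps F := fun k => - a k.
Definition ps_scale (c : F) (a : ps F) : ps F := fun k => c * a k.
Definition ps_mul (a b : ps F) : ps F :=
  fun k => \sum_(i < k.+1) a i * b (k - i)%N.
Definition ps_one : ps F := fun k => (k == 0%N)%:R.
Definition ps_exp (a : ps F) (e : nat) : ps F := iter e (ps_mul a) ps_one.

Definition ps_Tpow (e : nat) : ps F := fun k => (k == e)%:R.

Definition bracket (m : nat) : ps F :=
  ps_add (ps_Tpow (#|F| ^ m)) (ps_opp (ps_Tpow 1)).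

(* Hasse derivative: D_n (sum_i a_i T^i) = sum_i C(i,n) a_i T^(i-n);
   coefficient of T^k is C(k+n,n) a_(k+n). *)
Definition hasse (n : nat) (x : ps F) : ps F :=
  fun k => ('C(k + n, n))%:R * x (k + n)%N.

(* T-adic convergence of the series sum_i a i to s: for every K there is N
   such that every partial sum sum_(i<M), M >= N, agrees with s modulo T^K. *)
Definition ps_series_eq (a : nat -> ps F) (s : ps F) : Prop :=
  forall K : nat, exists N : nat, forall M : nat, (N <= M)%N ->
    forall k : nat, (k < K)%N -> \sum_(i < M) a i k = s k.

End PS.

(* Main.v *)
Require Import Defs.
From mathcomp Require Import all_boot all_algebra all_field all_fingroup all_solvable.
From Stdlib Require Import FunctionalExtensionality.
From mathcomp Require Import zify.
Set Implicit Arguments. Unset Strict Implicit. Unset Printing Implicit Defensive.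
Import GRing.Theory.
Local Open Scope ring_scope.

Section Aux.
Variable F : finFieldType.
Variable m : nat.
Local Notation e := (#|F| ^ m)%N.

Lemma pn : [pchar {poly F}].-nat e.
Proof.
have [p pr pc] := finPcharP F.
rewrite (eq_pnat _ (@pchar_poly F)) (eq_pnat _ (pcharf_eq pc)) pnatX.
apply/orP; left.
have := pprimeChar_pgroup pc. by rewrite /pgroup cardsT.
Qed.

Lemma e_gt0 : (0 < e)%N.
Proof. by rewrite expn_gt0 (ltn_trans _ (finNzRing_gt1 F)). Qed.

Lemma frobc (c : F) : c ^+ e = c.
Proof. elim: m => [|k IH]; first by rewrite expr1. by rewrite expnSr exprM IH expf_card. Qed.

Lemma frob (Q : {poly F}) : Q ^+ e = Q \Po 'X^e.
Proof.
elim/poly_ind: Q => [|p c IH].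
  by rewrite comp_poly0 expr0n eqn0Ngt e_gt0.
rewrite comp_poly_MXaddC exprDn_pchar ?pn // exprMn IH -polyC_exp frobc.
by [].
Qed.

Definition pso (p : {poly F}) : ps F := fun k => p`_k.

Lemma pso_mul p q : ps_mul (pso p) (pso q) = pso (p * q).
Proof. by apply: functional_extensionality => k; rewrite /ps_mul /pso coefM. Qed.

Lemma pso_exp p i : ps_exp (pso p) i = pso (p ^+ i).
Proof.
elim: i => [|i IH].
  apply: functional_extensionality => k; rewrite /ps_exp /= /ps_one /pso coefC.
  by case: k.
by rewrite /ps_exp iterS -/(ps_exp _ i) IH pso_mul exprS.
Qed.

Lemma pso_opp p : ps_opp (pso p) = pso (- p).
Proof. by apply: functional_extensionality => k; rewrite /ps_opp /pso coefN. Qed.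

Lemma pso_scale c p : ps_scale c (pso p) = pso (c *: p).
Proof. by apply: functional_extensionality => k; rewrite /ps_scale /pso coefZ. Qed.

Lemma pso_hasse j p : hasse j (pso p) = pso (p^`N(j)).
Proof.
apply: functional_extensionality => k.
by rewrite /hasse /pso coef_nderivn addnC mulr_natl.
Qed.

Definition hh : {poly F} := 'X^e - 'X.

Lemma pso_br : bracket F m = pso hh.
Proof.
apply: functional_extensionality => k.
by rewrite /bracket /ps_add /ps_opp /ps_Tpow /pso /hh coefB coefXn coefX.
Qed.

Lemma hhX : hh = 'X * ('X^(e.-1) - 1).
Proof. by rewrite mulrBr mulr1 -exprS prednK ?e_gt0. Qed.

Lemma lowX (g : {poly F}) i j : (j < i)%N -> (('X * g) ^+ i)`_j = 0.
Proof. by move=> ji; rewrite exprMn coefXnM ji. Qed.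

Lemma lowXM (g r : {poly F}) i j : (j < i)%N -> (('X * g) ^+ i * r)`_j = 0.
Proof. by move=> ji; rewrite exprMn -mulrA coefXnM ji. Qed.

Definition agree N (a b : ps F) := forall k, (k < N)%N -> a k = b k.

Lemma agree_le N N' a b : (N <= N')%N -> agree N' a b -> agree N a b.
Proof. by move=> le h k kN; apply: h; apply: leq_trans le. Qed.

Lemma agree_mul N a a' b b' : agree N a a' -> agree N b b' ->
  agree N (ps_mul a b) (ps_mul a' b').
Proof.
move=> ha hb k kN; rewrite /ps_mul; apply: eq_bigr => i _.
have ik : (i <= k)%N by rewrite -ltnS.
have h1 : (i < N)%N by exact: leq_ltn_trans ik kN.
have h2 : (k - i < N)%N by exact: leq_ltn_trans (leq_subr _ _) kN.
by rewrite ha // hb.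
Qed.

Lemma agree_exp N a a' i : agree N a a' -> agree N (ps_exp a i) (ps_exp a' i).
Proof.
move=> ha; elim: i => [|i IH] k kN //.
rewrite /ps_exp !iterS; exact: (agree_mul ha IH).
Qed.

Lemma agree_scale N c a a' : agree N a a' -> agree N (ps_scale c a) (ps_scale c a').
Proof. by move=> h k kN; rewrite /ps_scale h. Qed.

Lemma agree_hasse N j a a' : agree (N + j) a a' -> agree N (hasse j a) (hasse j a').
Proof. by move=> h k kN; rewrite /hasse h // ltn_add2r. Qed.

Lemma mul_low (A b : ps F) i k : (forall j, (j < i)%N -> A j = 0) -> (k < i)%N ->
  ps_mul A b k = 0.
Proof.
move=> hA ki; rewrite /ps_mul big1 // => j _; rewrite hA ?mul0r //.
have := ltn_ord j; rewrite ltnS => jk; exact: leq_ltn_trans jk ki.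
Qed.

Lemma series_from_coef (a : nat -> ps F) s :
  (forall i k, (k < i)%N -> a i k = 0) ->
  (forall k, \sum_(i < k.+1) a i k = s k) -> ps_series_eq a s.
Proof.
move=> h0 hk K; exists K => M KM k kK.
have kM : (k.+1 <= M)%N by apply: leq_trans KM.
rewrite -(subnKC kM) big_split_ord /= [X in _ + X]big1 ?addr0 ?hk // => i _.
by apply: h0; rewrite ltnS leq_addr.
Qed.


Lemma binid a b c : ('C(a + b + c, c) * 'C(a + b, b) = 'C(b + c, c) * 'C(a + b + c, b + c))%N.
Proof.
have hpos : (0 < a`! * b`! * c`!)%N by rewrite !muln_gt0 !fact_gt0.
apply/eqP; rewrite -(eqn_pmul2r hpos); apply/eqP.
have e1 := bin_fact (leq_addl (a + b) c); rewrite addnK in e1.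
have e2 := bin_fact (leq_addl a b); rewrite addnK in e2.
have e3 := bin_fact (leq_addl b c); rewrite addnK in e3.
have e4 := bin_fact (leq_addl a (b + c)); rewrite addnK addnA in e4.
rewrite -e2 in e1; rewrite -e3 in e4.
move: e1 e4; generalize ('C(a + b + c, c)) ('C(a + b, b)) ('C(b + c, c)) ('C(a + b + c, b + c)) (a`!) (b`!) (c`!) ((a + b + c)`!).
move=> C1 C2 C3 C4 A B C N e1 e4. lia.
Qed.

Lemma nderivnN2 (P : {poly F}) n i :
  (P^`N(n))^`N(i) = ('C(i + n, n))%:R *: P^`N(i + n).
Proof.
apply/polyP => j; rewrite coefZ !coef_nderivn mulr_natl -!mulrnA.
have -> : (n + (i + j) = j + i + n)%N by lia.
have -> : (i + n + j = j + i + n)%N by lia.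
by rewrite (addnC i j) binid mulnC (addnC i n).
Qed.

Lemma taylor1 (Q : {poly F}) S : (size Q <= S)%N ->
  Q ^+ e = \sum_(i < S) Q^`N(i) * hh ^+ i.
Proof.
move=> hS; rewrite frob.
have -> : 'X^e = 'X + hh :> {poly F} by rewrite /hh addrC subrK.
rewrite /comp_poly (nderiv_taylor_wide (n := S) (mulrC _ _)) ?size_map_polyC //.
apply: eq_bigr => i _; rewrite nderivn_map.
by have := comp_polyXr (Q^`N(i)); rewrite /comp_poly => ->.
Qed.

Lemma taylor2 (Q : {poly F}) S : (size Q <= S)%N ->
  Q = \sum_(i < S) (Q^`N(i)) ^+ e * (- hh) ^+ i.
Proof.
move=> hS.
have hX : 'X^e + - hh = 'X :> {poly F} by rewrite /hh opprB addrC subrK.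
transitivity (Q \Po ('X^e + - hh)); first by rewrite hX comp_polyXr.
rewrite /comp_poly (nderiv_taylor_wide (n := S) (mulrC _ _)) ?size_map_polyC //.
apply: eq_bigr => i _; rewrite nderivn_map frob.
by [].
Qed.


Lemma coef_id1 (P : {poly F}) n k :
  \sum_(i < k.+1) (hh ^+ i * (('C(i + n, n))%:R *: P^`N(i + n)))`_k
  = ((P^`N(n)) ^+ e)`_k.
Proof.
rewrite (taylor1 (S := (k.+1 + size (P^`N(n)))%N)) ?leq_addl // coef_sum.
rewrite big_split_ord /= [X in _ + X]big1 ?addr0.
  by apply: eq_bigr => i _; rewrite nderivnN2 mulrC.
move=> i _; rewrite mulrC hhX lowXM //.
by rewrite ltnS leq_addr.
Qed.

Lemma coef_id2 (P : {poly F}) n k :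
  \sum_(i < k.+1) ((- hh) ^+ i * (('C(i + n, n))%:R *: (P^`N(i + n)) ^+ e))`_k
  = (P^`N(n))`_k.
Proof.
rewrite [in RHS](taylor2 (Q := P^`N(n)) (S := (k.+1 + size (P^`N(n)))%N)) ?leq_addl // coef_sum.
rewrite big_split_ord /= [X in _ + X]big1 ?addr0.
  apply: eq_bigr => i _; rewrite nderivnN2 mulrC.
  by rewrite [in RHS]frob comp_polyZ -frob.
move=> i _; rewrite mulrC hhX -mulrN lowXM //.
by rewrite ltnS leq_addr.
Qed.

End Aux.

Theorem proposition5 (F : finFieldType) (m n : nat) (x : ps F) :
  ps_series_eq
    (fun i => ps_mul (ps_exp (bracket F m) i)
                     (ps_scale ('C(i + n, n))%:R (hasse (i + n) x)))
    (ps_exp (hasse n x) (#|F| ^ m))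
  /\
  ps_series_eq
    (fun i => ps_mul (ps_exp (ps_opp (bracket F m)) i)
                     (ps_scale ('C(i + n, n))%:R
                               (ps_exp (hasse (i + n) x) (#|F| ^ m))))
    (hasse n x).
Proof.
have agP : forall k, agree (k.+1 + (k + n)) x (pso (\poly_(j < k.+1 + (k + n)) x j)).
  by move=> k j hj; rewrite /pso coef_poly hj.
split; apply: series_from_coef.
- move=> i k ki; rewrite pso_br pso_exp; apply: mul_low ki => j ji.
  by rewrite /pso hhX lowX.
- move=> k; set P := \poly_(j < k.+1 + (k + n)) x j.
  have hP := agP k; rewrite -/P in hP.
  have -> : ps_exp (hasse n x) (#|F| ^ m) k = ps_exp (hasse n (pso P)) (#|F| ^ m) k.
    apply: (agree_exp _ (N := k.+1)) => //.
    apply: agree_hasse; apply: agree_le hP.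
    by rewrite leq_add2l leq_addl.
  rewrite pso_hasse pso_exp /pso -(coef_id1 m P n k); apply: eq_bigr => i _.
  have ik : (i <= k)%N by rewrite -ltnS.
  rewrite (@agree_mul _ k.+1 _ (ps_exp (bracket F m) i) _
     (ps_scale ('C(i + n, n))%:R (hasse (i + n) (pso P)))) //.
    by rewrite pso_hasse pso_scale pso_br pso_exp pso_mul.
  apply: agree_scale; apply: agree_hasse; apply: agree_le hP.
  by rewrite leq_add2l leq_add2r.
- move=> i k ki; rewrite pso_br pso_opp pso_exp; apply: mul_low ki => j ji.
  by rewrite /pso hhX -mulrN lowX.
- move=> k; set P := \poly_(j < k.+1 + (k + n)) x j.
  have hP := agP k; rewrite -/P in hP.
  have -> : hasse n x k = hasse n (pso P) k.
    apply: (agree_hasse (N := k.+1)) => //.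
    apply: agree_le hP.
    by rewrite leq_add2l leq_addl.
  rewrite pso_hasse /pso -(coef_id2 m P n k); apply: eq_bigr => i _.
  have ik : (i <= k)%N by rewrite -ltnS.
  rewrite (@agree_mul _ k.+1 _ (ps_exp (ps_opp (bracket F m)) i) _
     (ps_scale ('C(i + n, n))%:R (ps_exp (hasse (i + n) (pso P)) (#|F| ^ m)))) //.
    by rewrite pso_hasse pso_exp pso_scale pso_br pso_opp pso_exp pso_mul.
  apply: agree_scale; apply: agree_exp; apply: agree_hasse; apply: agree_le hP.
  by rewrite leq_add2l leq_add2r.
Qed.
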